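(* Let $\alpha\in\mathbb{C}^N$. For any distinct $i,j,k\in\{1,\dots,N\}$, $$\partial_kM_{i,j}(\alpha)-\partial_iM_{j,k}(\alpha)=-\alpha_j\frac{x_k-x_i}{(x_i-x_j)(x_j-x_k)}M_{i,k}(\alpha)-\frac{\alpha_k}{x_j-x_k}M_{i,j}(\alpha)-\frac{\alpha_i}{x_i-x_j}M_{j,k}(\alpha).$$ Moreover, if $\alpha_j\ne 0$ for all $1\le j\le N$, the left ideal $\mathcal{I}(\alpha)\subset\mathcal{R}$ generated by all $M_{p,q}(\alpha)$, $1\le p\ne q\le N$, is generated by $M_{1,2}(\alpha),M_{2,3}(\alpha),\dots,M_{N-1,N}(\alpha)$.
   Context: $x=(x_1,\dots,x_N)$, $\partial_p=\partial/\partial x_p$. $\mathcal{R}=\mathbb{C}[x_1,\dots,x_N,\prod_{a<b}(x_a-x_b)^{-1}]\langle\partial_1,\dots,\partial_N\rangle$ is the ring of differential operators with coefficients in the localization of the polynomial ring at $\prod_{a<b}(x_a-x_b)$. For $p\ne q$: $M_{p,q}(\alpha)=\partial_p\partial_q+\frac{\alpha_q}{x_p-x_q}\partial_p+\frac{\alpha_p}{x_q-x_p}\partial_q$ (note $M_{p,q}(\alpha)=M_{q,p}(\alpha)$). *)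

(* Defs.v *)
From HB Require Import structures.
From mathcomp Require Import all_boot all_order all_algebra.
From mathcomp Require Import fraction.
From mathcomp Require Import complex.
From mathcomp Require Import reals.
From mathcomp Require Import mpoly.

Set Implicit Arguments.
Unset Strict Implicit.
Unset Printing Implicit Defensive.

Import Order.TTheory GRing.Theory Num.Theory.
Local Open Scope ring_scope.

Section DiffOps.
Variable R : realType.
Variable N : nat.

Definition CC := (R[i])%type.

Definition Pol := {mpoly CC[N]}.

(* its field of fractions C(x_1,...,x_N); the ring
   C[x, prod_{a<b}(x_a-x_b)^{-1}] is a subring of it *)
Definition K := {fraction Pol}.

Definition polF (p : Pol) : K := tofrac p.

Definition xv (p : 'I_N) : K := polF 'X_p.

Definition cst (c : CC) : K := polF (c%:MP).

Definition Delta : Pol :=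
  \prod_(a < N) \prod_(b < N | (a < b)%N) ('X_a - 'X_b).

(* the localization A = C[x, Delta^{-1}], as a subset of K *)
Definition inA (f : K) : Prop :=
  exists (p : Pol) (k : nat), f = polF p / polF (Delta ^+ k).

Definition pderiv (i : 'I_N) (f : K) : K :=
  let r := repr f in
  let n := \n_r in let d := \d_r in
  (polF (mderiv i n * d - n * mderiv i d)) / (polF d) ^+ 2.

(* Operators act on K; the ring R of the paper is the ring of operators
   g |-> sum_beta c_beta * d^beta g with coefficients c_beta in A. *)
Definition Op := K -> K.

Definition opD (i : 'I_N) : Op := pderiv i.
Definition opcomp (P Q : Op) : Op := fun g => P (Q g).
Definition opadd (P Q : Op) : Op := fun g => P g + Q g.
Definition opsub (P Q : Op) : Op := fun g => P g - Q g.
Definition opscale (c : K) (P : Op) : Op := fun g => c * P g.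

Definition dmono (beta : seq 'I_N) (g : K) : K := foldr pderiv g beta.

Definition inDiffRing (P : Op) : Prop :=
  exists (m : nat) (c : 'I_m -> K) (beta : 'I_m -> seq 'I_N),
    (forall k, inA (c k)) /\
    forall g, P g = \sum_(k < m) c k * dmono (beta k) g.

Definition inLeftIdeal (S : Op -> Prop) (T : Op) : Prop :=
  exists (m : nat) (r s : 'I_m -> Op),
    (forall k, inDiffRing (r k) /\ S (s k)) /\
    forall g, T g = \sum_(k < m) r k (s k g).

Definition Mop (alpha : 'I_N -> CC) (p q : 'I_N) : Op :=
  fun g => pderiv p (pderiv q g)
           + (cst (alpha q) / (xv p - xv q)) * pderiv p g
           + (cst (alpha p) / (xv q - xv p)) * pderiv q g.

Definition allM (alpha : 'I_N -> CC) (T : Op) : Prop :=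
  exists p q : 'I_N, p != q /\ T = Mop alpha p q.

(* the set {M_{1,2}, M_{2,3}, ..., M_{N-1,N}} (0-based: M_{i,i+1}, i+1 < N) *)
Definition consecM (alpha : 'I_N -> CC) (T : Op) : Prop :=
  exists (p q : 'I_N), (val q = (val p).+1)%N /\ T = Mop alpha p q.

End DiffOps.

Arguments cst {R N}.
Arguments xv {R N}.
Arguments pderiv {R N}.
Arguments Mop {R N}.
Arguments allM {R N}.
Arguments consecM {R N}.
Arguments inLeftIdeal {R N}.
Arguments inDiffRing {R N}.

(* Main.v *)
Require Import Defs.
From HB Require Import structures.
From mathcomp Require Import all_boot all_order all_algebra.
From mathcomp Require Import fraction complex reals mpoly generic_quotient.
From mathcomp Require Import ring zify.
Import GRing.Theory Num.Theory.
Local Open Scope ring_scope.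
Local Open Scope quotient_scope.
Set Implicit Arguments.
Unset Strict Implicit.
Section Alg.
Variable T : comRingType.
Lemma alg1 (a b c d e f g h : T) :
  a * d - b * g - c * h + e * f = a * d + e * f - (b * g + c * h).
Proof. ring. Qed.
Lemma alg2 (n0 d0 n d n0' d0' n' d' : T) :
  (n0' * d0 - n0 * d0') * d ^+ 2 - (n' * d - n * d') * d0 ^+ 2 =
  d0 * d * (n0' * d - n' * d0 - n * d0' + n0 * d')
   - (d0' * d + d' * d0) * (n0 * d - n * d0).
Proof. ring. Qed.
Lemma gen_addD (δ : T -> T) (hD : forall x y, δ (x+y) = δ x + δ y)
  (hM : forall x y, δ (x*y) = δ x * y + x * δ y) a b c e :
  (δ (a*e + c*b) * (b*e) - (a*e + c*b) * δ (b*e)) * (b^+2 * e^+2) =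
  ((δ a * b - a * δ b) * e^+2 + (δ c * e - c * δ e) * b^+2) * (b*e)^+2.
Proof. rewrite !hD !hM. ring. Qed.
Lemma gen_mulD (δ : T -> T) (hD : forall x y, δ (x+y) = δ x + δ y)
  (hM : forall x y, δ (x*y) = δ x * y + x * δ y) a b c e :
  (δ (a*c) * (b*e) - (a*c) * δ (b*e)) * ((b^+2*e)*(b*e^+2)) =
  ((δ a*b - a*δ b)*c*(b*e^+2) + a*(δ c*e - c*δ e)*(b^+2*e)) * (b*e)^+2.
Proof. rewrite !hM. ring. Qed.
Lemma gen_comm (δ1 δ2 : T -> T) (hB1 : forall x y, δ1 (x-y) = δ1 x - δ1 y)
  (hB2 : forall x y, δ2 (x-y) = δ2 x - δ2 y)
  (hM1 : forall x y, δ1 (x*y) = δ1 x * y + x * δ1 y)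
  (hM2 : forall x y, δ2 (x*y) = δ2 x * y + x * δ2 y)
  (hC : forall x, δ1 (δ2 x) = δ2 (δ1 x)) a b :
  δ1 (δ2 a * b - a * δ2 b) * b^+2 - (δ2 a * b - a * δ2 b) * δ1 (b^+2) =
  δ2 (δ1 a * b - a * δ1 b) * b^+2 - (δ1 a * b - a * δ1 b) * δ2 (b^+2).
Proof. rewrite !hB1 !hB2 !expr2 !hM1 !hM2 [δ1 (δ2 a)]hC [δ1 (δ2 b)]hC. ring. Qed.
End Alg.
Section S.
Variable R : realType.
Variable N : nat.
Local Notation K := (K R N).
Local Notation Pol := (Pol R N).
Local Notation polF := (@polF R N).
Local Notation pderiv := (@pderiv R N).
Local Notation xv := (@xv R N).
Local Notation cst := (@cst R N).
Lemma mderivXi (i j : 'I_N) : mderiv i ('X_j : Pol) = (j == i)%:R.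
Proof.
rewrite mderivX mnm1E. case: eqP => [->|_]; last by rewrite scale0r.
have -> : (U_(i) - U_(i))%MM = 0%MM.
  by apply/mnmP=> k; rewrite mnmBE mnm0E subnn.
by rewrite mpolyX0 scale1r.
Qed.
Lemma repr_frac (f : K) : f = polF (\n_(repr f)) / polF (\d_(repr f)).
Proof.
have hd : polF (\d_(repr f)) != 0 by rewrite /polF tofrac_eq0 denom_ratioP.
apply: (canRL (mulfK hd)).
rewrite -{1}[f]reprK /polF. set x := repr f.
unlock tofrac. rewrite /=. rewrite !piE.
have d0 : \d_x != 0 := denom_ratioP x.
have d1 : \d_x * 1 != 0 by rewrite mulr1.
apply/eqmodP; rewrite /= equivfE /mulf !numden_Ratio ?oner_neq0 //.
by rewrite !mulr1 mulrC.
Qed.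
Lemma polF_inj (p q : Pol) : polF p = polF q -> p = q.
Proof. by move=> /eqP; rewrite /polF tofrac_eq => /eqP. Qed.
Lemma polF_neq0 (p : Pol) : p != 0 -> polF p != 0.
Proof. by rewrite /polF tofrac_eq0. Qed.
Lemma polFM (p q : Pol) : polF (p * q) = polF p * polF q.
Proof. exact: tofracM. Qed.
Lemma polFD (p q : Pol) : polF (p + q) = polF p + polF q.
Proof. exact: tofracD. Qed.
Lemma polFB (p q : Pol) : polF (p - q) = polF p - polF q.
Proof. exact: tofracB. Qed.
Lemma polFX (p : Pol) k : polF (p ^+ k) = polF p ^+ k.
Proof. exact: tofracXn. Qed.
Lemma polF1 : polF 1 = 1. Proof. exact: tofrac1. Qed.
Lemma polF0 : polF 0 = 0. Proof. exact: tofrac0. Qed.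

Lemma frac_eq (n d n0 d0 : Pol) : d != 0 -> d0 != 0 ->
  polF n / polF d = polF n0 / polF d0 -> n * d0 = n0 * d.
Proof.
move=> hd hd0 /eqP; rewrite eqr_div ?polF_neq0 // -!polFM => /eqP.
exact: polF_inj.
Qed.

Lemma polF_div_eq (a b c e : Pol) : b != 0 -> e != 0 -> a * e = c * b ->
  polF a / polF b = polF c / polF e.
Proof.
move=> hb he H.
have hb' := polF_neq0 hb; have he' := polF_neq0 he.
apply: (canLR (mulfK hb')).
rewrite mulrAC; apply/esym.
apply: (canLR (mulfK he')).
by rewrite -!polFM H.
Qed.
Lemma pderiv_frac (i : 'I_N) (n d : Pol) : d != 0 ->
  pderiv i (polF n / polF d) =
  polF (mderiv i n * d - n * mderiv i d) / polF (d ^+ 2).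
Proof.
move=> hd; rewrite /pderiv polFX.
set f := polF n / polF d.
have := repr_frac f.
set n0 := \n_(repr f); set d0 := \d_(repr f) => Ef.
have hd0 : d0 != 0 := denom_ratioP (repr f).
have F : n0 * d - n * d0 = 0.
  by rewrite (@frac_eq n d n0 d0 hd hd0 Ef) subrr.
have E : mderiv i n0 * d - mderiv i n * d0 - n * mderiv i d0 + n0 * mderiv i d = 0.
  have := congr1 (mderiv i) F; rewrite mderiv0 mderivB !mderivM => <-.
  exact: alg1.
rewrite -(polFX d 2) -(polFX d0 2).
apply: polF_div_eq; rewrite ?expf_neq0 //.
apply/eqP; rewrite -subr_eq0; apply/eqP.
by rewrite alg2 E F !mulr0 subrr.
Qed.

Lemma addF (a b c e : Pol) : b != 0 -> e != 0 ->
  polF a / polF b + polF c / polF e = polF (a * e + c * b) / polF (b * e).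
Proof.
move=> hb he; rewrite (addf_div _ _ (polF_neq0 hb) (polF_neq0 he)).
by rewrite polFD !polFM.
Qed.
Lemma mulF (a b c e : Pol) :
  polF a / polF b * (polF c / polF e) = polF (a * c) / polF (b * e).
Proof. by rewrite mulf_div !polFM. Qed.
Ltac genD := repeat match goal with |- context [mderiv ?i ?p] =>
  let x := fresh "dd" in set x := mderiv i p; clearbody x end.

Lemma polF_neq0' (p : Pol) : p != 0 -> polF p ^+ 2 != 0.
Proof. by move=> h; rewrite expf_neq0 // polF_neq0. Qed.

Lemma pderiv_polF i (p : Pol) : pderiv i (polF p) = polF (mderiv i p).
Proof.
have h1 : (1 : Pol) != 0 := oner_neq0 _.
rewrite -[polF p]divr1 -polF1 pderiv_frac //.
rewrite -[polF (mderiv i p)]divr1 -polF1.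
apply: polF_div_eq; rewrite ?expf_neq0 //.
rewrite -mpolyC1 mderivC; ring.
Qed.

Lemma pderivD i (f g : K) : pderiv i (f + g) = pderiv i f + pderiv i g.
Proof.
rewrite [f]repr_frac [g]repr_frac.
set a := \n_(repr f); set b := \d_(repr f); set c := \n_(repr g); set e := \d_(repr g).
have hb : b != 0 := denom_ratioP (repr f).
have he : e != 0 := denom_ratioP (repr g).
have hbe : b * e != 0 by rewrite mulf_neq0.
have hb2 : b ^+ 2 != 0 by rewrite expf_neq0.
have he2 : e ^+ 2 != 0 by rewrite expf_neq0.
rewrite (addF _ _ hb he).
rewrite (pderiv_frac _ _ hbe) (pderiv_frac _ _ hb) (pderiv_frac _ _ he).
rewrite (addF _ _ hb2 he2).
apply: polF_div_eq.
- exact: expf_neq0 hbe.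
- exact: mulf_neq0 hb2 he2.
exact: (@gen_addD Pol _ (mderivD i) (mderivM i)).
Qed.

Lemma pderivM i (f g : K) : pderiv i (f * g) = pderiv i f * g + f * pderiv i g.
Proof.
rewrite [f]repr_frac [g]repr_frac.
set a := \n_(repr f); set b := \d_(repr f); set c := \n_(repr g); set e := \d_(repr g).
have hb : b != 0 := denom_ratioP (repr f).
have he : e != 0 := denom_ratioP (repr g).
have hbe : b * e != 0 := mulf_neq0 hb he.
have hb2 : b ^+ 2 != 0 := expf_neq0 2 hb.
have he2 : e ^+ 2 != 0 := expf_neq0 2 he.
have h1 : b ^+ 2 * e != 0 := mulf_neq0 hb2 he.
have h2 : b * e ^+ 2 != 0 := mulf_neq0 hb he2.
rewrite mulF (pderiv_frac _ _ hbe) (pderiv_frac _ _ hb) (pderiv_frac _ _ he).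
rewrite !mulF (addF _ _ h1 h2).
apply: polF_div_eq.
- exact: expf_neq0 hbe.
- exact: mulf_neq0 h1 h2.
exact: (@gen_mulD Pol _ (mderivD i) (mderivM i)).
Qed.

Lemma pderiv0 i : pderiv i 0 = 0.
Proof.
have := pderivD i 0 0; rewrite addr0 => /eqP.
by rewrite -subr_eq subrr eq_sym => /eqP.
Qed.

Lemma pderivN i (f : K) : pderiv i (- f) = - pderiv i f.
Proof.
by apply/eqP; rewrite -addr_eq0 -pderivD addNr pderiv0.
Qed.

Lemma pderivB i (f g : K) : pderiv i (f - g) = pderiv i f - pderiv i g.
Proof. by rewrite pderivD pderivN. Qed.

Lemma pderivC i j (f : K) : pderiv i (pderiv j f) = pderiv j (pderiv i f).
Proof.
rewrite [f]repr_frac.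
set a := \n_(repr f); set b := \d_(repr f).
have hb : b != 0 := denom_ratioP (repr f).
have hb2 : b ^+ 2 != 0 := expf_neq0 2 hb.
rewrite (pderiv_frac _ _ hb) (pderiv_frac _ _ hb).
rewrite (pderiv_frac _ _ hb2) (pderiv_frac _ _ hb2).
have E := (@gen_comm Pol _ _ (mderivB i) (mderivB j) (mderivM i) (mderivM j) (fun x => mderiv_comm j i x) a b).
exact: (congr1 (fun p => polF p / polF ((b^+2)^+2)) E).
Qed.
End S.

Section Gen.
Variables (F : fieldType) (I : eqType) (D : I -> F -> F) (x a : I -> F).
Hypothesis hD : forall i f g, D i (f + g) = D i f + D i g.
Hypothesis hM : forall i f g, D i (f * g) = D i f * g + f * D i g.
Hypothesis hC : forall i j f, D i (D j f) = D j (D i f).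
Hypothesis hcoef : forall k p q r, p != q -> k != p -> k != q -> D k (a r / (x p - x q)) = 0.
Hypothesis hx : forall p q, p != q -> x p - x q != 0.
Definition gM p q g := D p (D q g) + a q / (x p - x q) * D p g + a p / (x q - x p) * D q g.
Lemma gen_part1 i j k : i != j -> j != k -> i != k -> forall g,
  D k (gM i j g) - D i (gM j k g)
  = - (a j * ((x k - x i) / ((x i - x j) * (x j - x k)))) * gM i k g
    - (a k / (x j - x k)) * gM i j g
    - (a i / (x i - x j)) * gM j k g.
Proof.
move=> hij hjk hik g.
have hji : j != i by rewrite eq_sym.
have hkj : k != j by rewrite eq_sym.
have hki : k != i by rewrite eq_sym.
rewrite /gM !hD.
rewrite (hM k (a j / (x i - x j))) (hM k (a i / (x j - x i))).
rewrite (hM i (a k / (x j - x k))) (hM i (a j / (x k - x j))).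
rewrite (hcoef _ hij hki hkj) (hcoef _ hji hkj hki) (hcoef _ hjk hij hik) (hcoef _ hkj hik hij).
rewrite !mul0r !add0r.
rewrite (hC k i (D j g)) (hC k j g) (hC k i g) (hC i j g).
have := hx hij; have := hx hji; have := hx hjk; have := hx hkj; have := hx hik; have := hx hki.
move: (x i) (x j) (x k) (a i) (a j) (a k) (D i g) (D j g) (D k g) => xi xj xk ai aj ak gi gj gk.
move=> h1 h2 h3 h4 h5 h6.
field.
by rewrite h1 h2 h3 h4 h5 h6.
Qed.
End Gen.

Section S.
Variable R : realType.
Variable N : nat.
Local Notation K := (K R N).
Local Notation Pol := (Pol R N).
Local Notation polF := (@polF R N).
Local Notation pderiv := (@pderiv R N).
Local Notation xv := (@xv R N).
Local Notation cst := (@cst R N).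

Lemma xvB (p q : 'I_N) : xv p - xv q = polF ('X_p - 'X_q).
Proof. by rewrite /xv polFB. Qed.

Lemma Xsub_neq0 (p q : 'I_N) : p != q -> ('X_p - 'X_q : Pol) != 0.
Proof.
move=> hpq; apply/eqP => H; have := congr1 (mderiv p) H.
rewrite mderivB !mderivXi eqxx eq_sym (negbTE hpq) mderiv0 subr0 => /eqP.
by rewrite oner_eq0.
Qed.

Lemma xv_neq0 (p q : 'I_N) : p != q -> xv p - xv q != 0.
Proof. by move=> h; rewrite xvB polF_neq0 // Xsub_neq0. Qed.

Lemma pderiv_coef (k p q : 'I_N) c : p != q -> k != p -> k != q ->
  pderiv k (cst c / (xv p - xv q)) = 0.
Proof.
move=> hpq hkp hkq.
rewrite xvB /cst (pderiv_frac _ _ (Xsub_neq0 hpq)) mderivC mderivB !mderivXi.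
rewrite eq_sym (negbTE hkp) eq_sym (negbTE hkq) subrr mulr0 mul0r subrr.
by rewrite polF0 mul0r.
Qed.

Lemma part1 (alpha : 'I_N -> CC R) (i j k : 'I_N) : i != j -> j != k -> i != k ->
     forall g : K,
       pderiv k (Mop alpha i j g) - pderiv i (Mop alpha j k g)
       = - (cst (alpha j) * ((xv k - xv i) / ((xv i - xv j) * (xv j - xv k))))
             * Mop alpha i k g
         - (cst (alpha k) / (xv j - xv k)) * Mop alpha i j g
         - (cst (alpha i) / (xv i - xv j)) * Mop alpha j k g.
Proof.
have hc : forall k p q r, p != q -> k != p -> k != q ->
   pderiv k ((fun r => cst (alpha r)) r / (xv p - xv q)) = 0.
  by move=> k0 p q r h1 h2 h3; exact: pderiv_coef.
exact: (gen_part1 (@pderivD R N) (@pderivM R N) (@pderivC R N) hc (@xv_neq0)).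
Qed.
End S.

Section S.
Variable R : realType.
Variable N : nat.
Local Notation K := (K R N).
Local Notation Pol := (Pol R N).
Local Notation polF := (@polF R N).
Local Notation pderiv := (@pderiv R N).
Local Notation xv := (@xv R N).
Local Notation cst := (@cst R N).
Local Notation inA := (@inA R N).
Local Notation Delta := (Delta R N).
Local Opaque Defs.pderiv.

Lemma Delta_neq0 : Delta != 0.
Proof.
apply/prodf_neq0 => a _; apply/prodf_neq0 => b hab.
apply: Xsub_neq0; apply: contraTneq hab => ->; by rewrite ltnn.
Qed.

Lemma Delta_factor (p q : 'I_N) : (p < q)%N -> exists Q : Pol, Delta = ('X_p - 'X_q) * Q.
Proof.
move=> hpq; rewrite /Delta (bigD1 p) //= [X in X * _](bigD1 q) //=.
by eexists; rewrite -mulrA.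
Qed.

Lemma inA_polF (p : Pol) : inA (polF p).
Proof. by exists p, 0%N; rewrite expr0 polF1 divr1. Qed.

Lemma inA_mul (c d : K) : inA c -> inA d -> inA (c * d).
Proof.
move=> [p [k ->]] [q [l ->]]; exists (p * q), (k + l)%N.
by rewrite mulF exprD.
Qed.

Lemma inA_pderiv i (c : K) : inA c -> inA (pderiv i c).
Proof.
move=> [p [k ->]].
have hD : Delta ^+ k != 0 := expf_neq0 k Delta_neq0.
rewrite (pderiv_frac _ _ hD); eexists; exists (k * 2)%N.
by rewrite exprM.
Qed.

Lemma inA_cst c : inA (cst c).
Proof. exact: inA_polF. Qed.

Lemma inv_helper (x q : K) : q != 0 -> x^-1 = q / (x * q).
Proof.
move=> hq; case: (eqVneq x 0) => [->|hx]; first by rewrite mul0r invr0 mulr0.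
by rewrite invfM mulrCA mulfV // mulr1.
Qed.

Lemma polFN1 : polF (-1) = -1.
Proof. by rewrite /polF tofracN tofrac1. Qed.

Lemma inA_invx (p q : 'I_N) : p != q -> inA ((xv p - xv q)^-1).
Proof.
wlog lt : p q / (p < q)%N.
  move=> H hpq; case: (ltnP p q) => h; first exact: H.
  have hqp : (q < p)%N.
    by rewrite ltn_neqAle h andbT; apply: contra_neq hpq => /val_inj ->.
  rewrite -opprB invrN -mulN1r -polFN1; apply: inA_mul; first exact: inA_polF.
  apply: H => //; by rewrite eq_sym.
move=> hpq; have [Q HQ] := Delta_factor lt.
have hQ : polF Q != 0.
  apply: polF_neq0; apply: contraNneq Delta_neq0 => hQ0.
  by rewrite HQ hQ0 mulr0.
exists Q, 1%N; rewrite expr1 HQ polFM -xvB.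
exact: inv_helper.
Qed.
End S.


Section Cat.
Variables (A : Type) (m n : nat) (a : 'I_m -> A) (b : 'I_n -> A).
Definition catf (k : 'I_(m + n)) : A :=
  match split k with inl i => a i | inr j => b j end.
Lemma catf_l i : catf (lshift n i) = a i.
Proof. by rewrite /catf -[lshift n i]/(unsplit (inl i : 'I_m + 'I_n)) unsplitK. Qed.
Lemma catf_r j : catf (rshift m j) = b j.
Proof. by rewrite /catf -[rshift m j]/(unsplit (inr j : 'I_m + 'I_n)) unsplitK. Qed.
Lemma sum_catf (V : zmodType) (F : A -> V) :
  \sum_(k < m + n) F (catf k) = \sum_(i < m) F (a i) + \sum_(j < n) F (b j).
Proof.
rewrite big_split_ord /=; congr (_ + _); apply: eq_bigr => ? _.
  by rewrite catf_l.
by rewrite catf_r.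
Qed.
Lemma catf_P (P : A -> Prop) : (forall i, P (a i)) -> (forall j, P (b j)) ->
  forall k, P (catf k).
Proof. by move=> ha hb k; rewrite /catf; case: (split k). Qed.
End Cat.

Section S.
Variable R : realType.
Variable N : nat.
Local Notation K := (K R N).
Local Notation Op := (Op R N).
Local Notation pderiv := (@pderiv R N).
Local Notation inA := (@inA R N).
Local Notation dmono := (@dmono R N).
Local Opaque Defs.pderiv.

Inductive DRi : Op -> Prop :=
| DR0 : DRi (fun _ => 0)
| DRadd P Q : DRi P -> DRi Q -> DRi (fun g => P g + Q g)
| DRmono c beta : inA c -> DRi (fun g => c * dmono beta g)
| DRext P Q : DRi P -> (forall g, P g = Q g) -> DRi Q.

Lemma DR_of (P : Op) : inDiffRing P -> DRi P.
Proof.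
case=> m [c [beta [hc hP]]].
elim: m c beta hc P hP => [|m IH] c beta hc P hP.
  by apply: (DRext DR0) => g; rewrite hP big_ord0.
apply: (DRext (DRadd (IH (fun k => c (widen_ord (leqnSn m) k))
   (fun k => beta (widen_ord (leqnSn m) k)) (fun k => hc _) _ (fun g => erefl))
   (DRmono (beta ord_max) (hc ord_max)))).
by move=> g; rewrite hP big_ord_recr.
Qed.

Lemma of_DR (P : Op) : DRi P -> inDiffRing P.
Proof.
elim=> {P}.
- exists 0%N, (fun _ => 0), (fun _ => [::]); split; first by case.
  by move=> g; rewrite big_ord0.
- move=> P Q _ [m1 [c1 [b1 [h1 e1]]]] _ [m2 [c2 [b2 [h2 e2]]]].
  pose ab := catf (fun i => (c1 i, b1 i)) (fun j => (c2 j, b2 j)).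
  exists (m1 + m2)%N, (fun k => (ab k).1), (fun k => (ab k).2); split.
    by apply: (catf_P (P := fun x => inA x.1)).
  move=> g; rewrite e1 e2.
  by rewrite (sum_catf _ _ (fun x => x.1 * dmono x.2 g)).
- move=> c beta hc; exists 1%N, (fun _ => c), (fun _ => beta); split => //.
  by move=> g; rewrite big_ord1.
- move=> P Q _ [m [c [b [h e]]]] hPQ; exists m, c, b; split => // g.
  by rewrite -hPQ e.
Qed.

Inductive Ideal (S : Op -> Prop) : Op -> Prop :=
| I0 : Ideal S (fun _ => 0)
| Iadd T1 T2 : Ideal S T1 -> Ideal S T2 -> Ideal S (fun g => T1 g + T2 g)
| Igen P s : DRi P -> S s -> Ideal S (fun g => P (s g))
| Iext T T' : Ideal S T -> (forall g, T g = T' g) -> Ideal S T'.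

Lemma Ideal_of (S : Op -> Prop) (T : Op) : inLeftIdeal S T -> Ideal S T.
Proof.
case=> m [r [s [hrs hT]]].
elim: m r s hrs T hT => [|m IH] r s hrs T hT.
  by apply: (Iext (I0 S)) => g; rewrite hT big_ord0.
apply: (Iext (Iadd (IH (fun k => r (widen_ord (leqnSn m) k))
   (fun k => s (widen_ord (leqnSn m) k)) (fun k => hrs _) _ (fun g => erefl))
   (Igen (DR_of (hrs ord_max).1) (hrs ord_max).2))).
by move=> g; rewrite hT big_ord_recr.
Qed.

Lemma of_Ideal (S : Op -> Prop) (T : Op) : Ideal S T -> inLeftIdeal S T.
Proof.
elim=> {T}.
- exists 0%N, (fun _ => id), (fun _ => id); split; first by case.
  by move=> g; rewrite big_ord0.
- move=> P Q _ [m1 [r1 [s1 [h1 e1]]]] _ [m2 [r2 [s2 [h2 e2]]]].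
  pose ab := catf (fun i => (r1 i, s1 i)) (fun j => (r2 j, s2 j)).
  exists (m1 + m2)%N, (fun k => (ab k).1), (fun k => (ab k).2); split.
    by apply: (catf_P (P := fun x => inDiffRing x.1 /\ S x.2)).
  move=> g; rewrite e1 e2.
  by rewrite (sum_catf _ _ (fun x => x.1 (x.2 g))).
- move=> P s hP hs; exists 1%N, (fun _ => P), (fun _ => s); split.
    by move=> _; split => //; exact: of_DR.
  by move=> g; rewrite big_ord1.
- move=> P Q _ [m [r [s [h e]]]] hPQ; exists m, r, s; split => // g.
  by rewrite -hPQ e.
Qed.
End S.


Section S.
Variable R : realType.
Variable N : nat.
Local Notation K := (K R N).
Local Notation Op := (Op R N).
Local Notation pderiv := (@pderiv R N).
Local Notation inA := (@inA R N).
Local Notation dmono := (@dmono R N).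
Local Notation DRi := (@DRi R N).
Local Notation Ideal := (@Ideal R N).
Local Opaque Defs.pderiv.

Lemma dmonoD beta (f g : K) : dmono beta (f + g) = dmono beta f + dmono beta g.
Proof. by elim: beta => [|i beta IH] //=; rewrite IH pderivD. Qed.

Lemma dmono0 beta : dmono beta 0 = 0.
Proof. by elim: beta => [|i beta IH] //=; rewrite IH pderiv0. Qed.

Lemma DRi_lin (P : Op) : DRi P -> (forall f g, P (f + g) = P f + P g) /\ P 0 = 0.
Proof.
elim=> {P}.
- by split => [f g|]; rewrite ?addr0.
- move=> P Q _ [hP hP0] _ [hQ hQ0]; split => [f g|]; last by rewrite hP0 hQ0 addr0.
  by rewrite hP hQ addrACA.
- move=> c beta _; split => [f g|]; last by rewrite dmono0 mulr0.
  by rewrite dmonoD mulrDr.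
- move=> P Q _ [hP hP0] e; split => [f g|]; by rewrite -!e ?hP.
Qed.

Lemma DRi_scale (c : K) (P : Op) : inA c -> DRi P -> DRi (fun g => c * P g).
Proof.
move=> hc; elim=> {P}.
- by apply: (DRext (DR0 R N)) => g; rewrite mulr0.
- move=> P Q _ hP _ hQ; apply: (DRext (DRadd hP hQ)) => g; by rewrite mulrDr.
- move=> d beta hd; apply: (DRext (DRmono beta (inA_mul hc hd))) => g; by rewrite mulrA.
- move=> P Q _ hP e; apply: (DRext hP) => g; by rewrite e.
Qed.

Lemma DRi_deriv i (P : Op) : DRi P -> DRi (fun g => pderiv i (P g)).
Proof.
elim=> {P}.
- by apply: (DRext (DR0 R N)) => g; rewrite pderiv0.
- move=> P Q _ hP _ hQ; apply: (DRext (DRadd hP hQ)) => g; by rewrite pderivD.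
- move=> d beta hd.
  apply: (DRext (DRadd (DRmono beta (inA_pderiv i hd)) (DRmono (i :: beta) hd))) => g.
  by rewrite pderivM.
- move=> P Q _ hP e; apply: (DRext hP) => g; by rewrite e.
Qed.

Lemma DRi_id : DRi (fun g => g).
Proof. by apply: (DRext (DRmono [::] (inA_polF 1))) => g; rewrite polF1 mul1r. Qed.

Lemma DRi_dmono beta (P : Op) : DRi P -> DRi (fun g => dmono beta (P g)).
Proof.
move=> hP; elim: beta => [|i beta IH] /=; first exact: (DRext hP).
exact: (DRi_deriv i IH).
Qed.

Lemma DRi_comp (P Q : Op) : DRi P -> DRi Q -> DRi (fun g => P (Q g)).
Proof.
move=> hP hQ; elim: hP => {P}.
- exact: (DR0 R N).
- move=> P1 P2 _ h1 _ h2; exact: (DRadd h1 h2).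
- move=> c beta hc; exact: (DRi_scale hc (DRi_dmono beta hQ)).
- move=> P1 P2 _ h e; apply: (DRext h) => g; by rewrite e.
Qed.

Lemma Ideal_comp (S : Op -> Prop) (P T : Op) : DRi P -> Ideal S T -> Ideal S (fun g => P (T g)).
Proof.
move=> hP; have [hlin h0] := DRi_lin hP.
elim=> {T}.
- by apply: (Iext (I0 (R:=R) (N:=N) S)) => g; rewrite h0.
- move=> T1 T2 _ h1 _ h2; apply: (Iext (Iadd h1 h2)) => g; by rewrite hlin.
- move=> P' s hP' hs; exact: (Igen (DRi_comp hP hP') hs).
- move=> T T' _ h e; apply: (Iext h) => g; by rewrite e.
Qed.

Lemma Ideal_gen (S : Op -> Prop) (s : Op) : S s -> Ideal S s.
Proof. by move=> hs; apply: (Iext (Igen DRi_id hs)). Qed.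

Lemma Ideal_scale (S : Op -> Prop) (c : K) (T : Op) : inA c -> Ideal S T ->
  Ideal S (fun g => c * T g).
Proof. move=> hc; apply: Ideal_comp; exact: (DRi_scale hc DRi_id). Qed.

Lemma Ideal_deriv (S : Op -> Prop) i (T : Op) : Ideal S T ->
  Ideal S (fun g => pderiv i (T g)).
Proof. apply: Ideal_comp; exact: (DRi_deriv i DRi_id). Qed.
End S.


Section G.
Variable F : fieldType.
Lemma solveM (c e f X Y A B M : F) : c != 0 -> X - Y = - c * M - e * A - f * B ->
  (-c)^-1 * X + (-(-c)^-1) * Y + (-c)^-1 * e * A + (-c)^-1 * f * B = M.
Proof.
move=> hc E.
have -> : X = (- c * M - e * A - f * B) + Y by rewrite -E subrK.
field.
by rewrite oppr_eq0.
Qed.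
Lemma invc (a w s t : F) :
  (-(a * (w / (s * t))))^-1 = (-1) * a^-1 * (s * t) * w^-1.
Proof. rewrite invrN !invfM !invrK mulN1r. ring. Qed.
Lemma inv_of (x y : F) : x * y = 1 -> x^-1 = y.
Proof.
move=> h; case: (eqVneq x 0) => [x0|hx].
  by move: h; rewrite x0 mul0r => /eqP; rewrite eq_sym oner_eq0.
by rewrite -[x^-1]mulr1 -h mulKf.
Qed.
End G.

Section S.
Variable R : realType.
Variable N : nat.
Local Notation K := (K R N).
Local Notation Op := (Op R N).
Local Notation polF := (@polF R N).
Local Notation pderiv := (@pderiv R N).
Local Notation xv := (@xv R N).
Local Notation cst := (@cst R N).
Local Notation inA := (@inA R N).
Local Notation DRi := (@DRi R N).
Local Notation Ideal := (@Ideal R N).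
Local Opaque Defs.pderiv.

Lemma Mop_sym alpha (p q : 'I_N) (g : K) : Mop alpha p q g = Mop alpha q p g.
Proof. by rewrite /Mop (pderivC p q) addrAC. Qed.

Lemma cst_inv (a : CC R) : a != 0 -> (cst a)^-1 = cst a^-1.
Proof.
move=> ha; apply: inv_of.
by rewrite /cst -polFM -mpolyCM mulfV // mpolyC1 polF1.
Qed.

Lemma inA_xvB (p q : 'I_N) : inA (xv p - xv q).
Proof. rewrite xvB; exact: inA_polF. Qed.

Lemma inA_N1 : inA (-1).
Proof. rewrite -polFN1; exact: inA_polF. Qed.

Lemma keyM alpha (ha : forall j, alpha j != 0) d :
  forall p q : 'I_N, nat_of_ord q = (nat_of_ord p + d.+1)%N -> Ideal (consecM alpha) (Mop alpha p q).
Proof.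
elim: d => [|d IH] p q hq.
  by apply: Ideal_gen; exists p, q; split => //; exact: (etrans hq (addn1 _)).
have hjN : (nat_of_ord p + d.+1 < N)%N by have := ltn_ord q; lia.
pose j : 'I_N := Ordinal hjN.
have Hij := IH p j erefl.
have Hjk : Ideal (consecM alpha) (Mop alpha j q).
  by apply: Ideal_gen; exists j, q; split => //; exact: (etrans hq (addnS _ _)).
have hpj : p != j by apply/eqP => /(congr1 (@nat_of_ord N)) /=; lia.
have hjq : j != q by apply/eqP => /(congr1 (@nat_of_ord N)) /=; lia.
have hpq : p != q by apply/eqP => /(congr1 (@nat_of_ord N)) /=; lia.
have E := part1 alpha hpj hjq hpq.
set c := cst (alpha j) * ((xv q - xv p) / ((xv p - xv j) * (xv j - xv q))).
set e := cst (alpha q) / (xv j - xv q).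
set f := cst (alpha p) / (xv p - xv j).
have hc : c != 0.
  rewrite mulf_neq0 //; first by rewrite /cst polF_neq0 // mpolyC_eq0.
  rewrite mulf_neq0 ?invr_eq0 ?mulf_neq0 ?xv_neq0 //; by rewrite eq_sym.
have hu : inA (-c)^-1.
  rewrite /c invc cst_inv //.
  apply: inA_mul; last by apply: inA_invx; rewrite eq_sym.
  apply: inA_mul; last by apply: inA_mul; exact: inA_xvB.
  apply: inA_mul; [exact: inA_N1 | exact: inA_cst].
have hnu : inA (-(-c)^-1) by rewrite -mulN1r; exact: inA_mul inA_N1 hu.
have he : inA e by apply: inA_mul; [exact: inA_cst | exact: inA_invx].
have hf : inA f by apply: inA_mul; [exact: inA_cst | exact: inA_invx].
apply: (Iext (Iadd (Iadd (Iadd (Ideal_scale hu (Ideal_deriv q Hij))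
                               (Ideal_scale hnu (Ideal_deriv p Hjk)))
                         (Ideal_scale (inA_mul hu he) Hij))
                   (Ideal_scale (inA_mul hu hf) Hjk))).
move=> g; exact: (solveM hc (E g)).
Qed.

Lemma M_in_consec alpha (ha : forall j, alpha j != 0) (p q : 'I_N) : p != q ->
  Ideal (consecM alpha) (Mop alpha p q).
Proof.
wlog lt : p q / (p < q)%N.
  move=> H hpq; case: (ltnP p q) => h; first exact: H.
  have hqp : (q < p)%N.
    by rewrite ltn_neqAle h andbT; apply: contra_neq hpq => /val_inj ->.
  apply: (Iext (H q p hqp _)); first by rewrite eq_sym.
  by move=> g; rewrite Mop_sym.
move=> _; apply: (keyM ha (d := ((q - p)%N).-1)); by rewrite prednK ?subn_gt0 // subnKC // ltnW.
Qed.

Lemma part2 alpha : (forall j : 'I_N, alpha j != 0) ->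
  forall T : Op, inLeftIdeal (allM alpha) T <-> inLeftIdeal (consecM alpha) T.
Proof.
move=> ha T; split.
  move/Ideal_of => hT; apply: of_Ideal; elim: hT => {T}.
  - exact: I0.
  - move=> T1 T2 _ h1 _ h2; exact: Iadd h1 h2.
  - move=> P s hP [p [q [hpq ->]]]; exact: (Ideal_comp hP (M_in_consec ha hpq)).
  - move=> T T' _ h e; exact: (Iext h e).
case=> m [r [s [h e]]]; exists m, r, s; split => // k.
have [hr [p [q [hq ->]]]] := h k; split => //; exists p, q; split => //.
by apply/eqP => hpq; move: hq; rewrite hpq => /n_Sn.
Qed.
End S.


Theorem mainTheorem8 (R : realType) (N : nat) (alpha : 'I_N -> CC R) :
  (forall i j k : 'I_N, i != j -> j != k -> i != k ->
     forall g : K R N,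
       pderiv k (Mop alpha i j g) - pderiv i (Mop alpha j k g)
       = - (cst (alpha j) * ((xv k - xv i) / ((xv i - xv j) * (xv j - xv k))))
             * Mop alpha i k g
         - (cst (alpha k) / (xv j - xv k)) * Mop alpha i j g
         - (cst (alpha i) / (xv i - xv j)) * Mop alpha j k g)
  /\
  ((forall j : 'I_N, alpha j != 0) ->
     forall T : Op R N, inLeftIdeal (allM alpha) T <-> inLeftIdeal (consecM alpha) T).
Proof.
split; first by move=> i j k; exact: part1.
exact: part2.
Qed.
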